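(* Let $\mathcal{A}$ be a finite set of alternatives and let $u,w\colon\mathcal{A}\times\mathbb{R}\to\mathbb{R}$ be two quasi-linear utility functions. (1) If both $u$ and $w$ pos-represent the same preference, then there exists a constant $C\in\mathbb{R}$ such that $w(a,z)=u(a,z)+C$ for all $a\in\mathcal{A}$, $z\in\mathbb{R}$. (2) If there exists a constant $C\geqslant 0$ such that $w(a,z)=u(a,z)-C$ for all $a\in\mathcal{A}$, $z\in\mathbb{R}$, then $w$ pos-represents every preference that is pos-represented by $u$.
   Context: A preference is a complete, transitive binary relation $\succcurlyeq$ on $\mathcal{A}\times\mathbb{R}$, where $(a,z)$ means that alternative $a$ is chosen and the agent pays $z$. A function $u\colon\mathcal{A}\times\mathbb{R}\to\mathbb{R}$ pos-represents $\succcurlyeq$ if for all $a,b\in\mathcal{A}$ and $z_a,z_b\in\mathbb{R}$ such that $u(a,z_a)\geqslant 0$ or $u(b,z_b)\geqslant 0$, one has $(a,z_a)\succcurlyeq(b,z_b)\iff u(a,z_a)\geqslant u(b,z_b)$. A utility function $u$ is quasi-linear if $u(a,z)=v(a)-z$ for some function $v\colon\mathcal{A}\to\mathbb{R}$. *)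

(* Defs.v *)
From mathcomp Require Import all_boot all_order all_algebra.
From mathcomp Require Import reals.
Set Implicit Arguments. Unset Strict Implicit. Unset Printing Implicit Defensive.
Import Order.TTheory GRing.Theory Num.Theory.
Local Open Scope ring_scope.

(* A preference: complete, transitive binary relation on A x R,
   where (a, z) means alternative a is chosen and the agent pays z. *)
Definition is_preference (A : Type) (R : realType)
  (pref : A * R -> A * R -> Prop) : Prop :=
  (forall x y, pref x y \/ pref y x) /\
  (forall x y t, pref x y -> pref y t -> pref x t).

Definition pos_represents (A : Type) (R : realType)
  (u : A * R -> R) (pref : A * R -> A * R -> Prop) : Prop :=
  forall (a b : A) (za zb : R), (0 <= u (a, za) \/ 0 <= u (b, zb)) ->
    (pref (a, za) (b, zb) <-> u (a, za) >= u (b, zb)).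

Definition quasi_linear (A : Type) (R : realType) (u : A * R -> R) : Prop :=
  exists v : A -> R, forall (a : A) (z : R), u (a, z) = v a - z.

(* Main.v *)
Require Import Defs.
From mathcomp Require Import all_boot all_order all_algebra.
From mathcomp Require Import reals.
From mathcomp Require Import ring lra.
Import Order.TTheory GRing.Theory Num.Theory.
Local Open Scope ring_scope.

Theorem claim2 (A : finType) (R : realType) (u w : A * R -> R)
  (hu : quasi_linear u) (hw : quasi_linear w) :
  (forall pref : A * R -> A * R -> Prop,
     is_preference pref -> pos_represents u pref -> pos_represents w pref ->
     exists C : R, forall (a : A) (z : R), w (a, z) = u (a, z) + C) /\
  ((exists C : R, 0 <= C /\ forall (a : A) (z : R), w (a, z) = u (a, z) - C) ->
     forall pref : A * R -> A * R -> Prop,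
       is_preference pref -> pos_represents u pref -> pos_represents w pref).
Proof.
case: hu => v hv; case: hw => v' hv'.
split.
- move=> pref _ pu pw.
  have key : forall a b : A, v' b - v b <= v' a - v a.
    move=> a b.
    pose za := Num.min (v a) (v' a).
    have h1 : za <= v a by rewrite /za ge_min lexx.
    have h2 : za <= v' a by rewrite /za ge_min lexx orbT.
    have hp : pref (a, za) (b, v b - v a + za).
      apply/(pu a b za (v b - v a + za)).
        by left; rewrite hv subr_ge0.
      rewrite !hv; lra.
    have hw0 : 0 <= w (a, za) by rewrite hv' subr_ge0.
    have := (pw a b za (v b - v a + za) (or_introl hw0)).1 hp.
    rewrite !hv' => H; lra.
  case: (pickP A) => [a0 _|hA].
    exists (v' a0 - v a0) => a z; rewrite hv hv'.
    have := key a0 a; have := key a a0; lra.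
  by exists 0 => a; have := hA a.
- case=> C [C0 hC] pref _ pu a b za zb hpos.
  rewrite !hC.
  have hpos' : 0 <= u (a, za) \/ 0 <= u (b, zb).
    case: hpos; rewrite !hC => H; [left|right]; lra.
  rewrite (pu a b za zb hpos').
  by rewrite lerD2r.
Qed.
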